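(* For $(a_{ij})\in\mathbb P^9$, the five Plücker relations hold if and only if the polynomial identity $A_zB_w=D_zD_w-DD_{zw}$ holds in $\mathbb C[z,w]$. If they hold, then the three superintegrability conditions (SIC) are equivalent to the two identities $$A_zD_w^2=2DD_wD_{zz}-\tfrac32D^2D_{zzw}-D_wD_z^2+DD_zD_{zw},\qquad B_wD_z^2=2DD_zD_{ww}-\tfrac32D^2D_{wwz}-D_zD_w^2+DD_wD_{zw},$$ and they imply $$D_z^2D_{ww}+D_w^2D_{zz}+D_zD_wD_{zw}=D\,(2D_{zz}D_{ww}+D_zD_{wwz}+D_wD_{zzw}+D_{zw}^2).$$
   Context: Homogeneous coordinates $a_{ij}$ ($i,j\ge0$, $i+j\le3$) on $\mathbb P^9$. Define polynomials in $z,w$: $D(z,w)=\sum_{0\le i,j\le2,(i,j)\ne(2,2)}a_{ij}z^iw^j$, $A_z(w)=a_{21}w^2+2a_{20}w+a_{30}$, $B_w(z)=a_{12}z^2+2a_{02}z+a_{03}$ ($A_z$ and $B_w$ are names of these polynomials; subscripts on $D$ denote partial derivatives, e.g. $D_{zzw}=\partial_z^2\partial_wD$). Plücker relations: $a_{03}a_{21}-a_{02}a_{11}+a_{01}a_{12}=0$, $a_{03}a_{20}-a_{02}a_{10}+a_{00}a_{12}=0$, $a_{03}a_{30}-a_{01}a_{10}+a_{00}a_{11}=0$, $a_{02}a_{30}-a_{01}a_{20}+a_{00}a_{21}=0$, $a_{12}a_{30}-a_{11}a_{20}+a_{10}a_{21}=0$. Superintegrability conditions (SIC): the polynomial identities $3A_zDD_{ww}-2A_zB_wD_z-2A_zD_w^2+DD_wD_{zz}=0$,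 $3B_wDD_{zz}-2A_zB_wD_w-2B_wD_z^2+DD_zD_{ww}=0$, and $2D^2D_{zz}D_{ww}-B_wDD_zD_{zz}-A_zDD_wD_{ww}-A_zB_wD_zD_w+A_z^2B_w^2=0$. All identities are identities of polynomials in $z,w$. *)

(* Defs.v *)
From HB Require Import structures.
From mathcomp Require Import all_boot all_order all_algebra.
From mathcomp Require Import mpoly.
Set Implicit Arguments. Unset Strict Implicit. Unset Printing Implicit Defensive.
Import Order.TTheory GRing.Theory Num.Theory.
Local Open Scope ring_scope.

Section Defs.
Variable C : numClosedFieldType.

Definition vz : {mpoly C[2]} := 'X_(0 : 'I_2).
Definition vw : {mpoly C[2]} := 'X_(1 : 'I_2).

Definition pz (p : {mpoly C[2]}) : {mpoly C[2]} := mderiv (0 : 'I_2) p.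
Definition pw (p : {mpoly C[2]}) : {mpoly C[2]} := mderiv (1 : 'I_2) p.

(* homogeneous coordinates a_ij (only i+j <= 3 are used) *)
Definition cst (c : C) : {mpoly C[2]} := c%:MP.

Definition Dpol (a : nat -> nat -> C) : {mpoly C[2]} :=
  \sum_(i < 3) \sum_(j < 3 | (nat_of_ord i, nat_of_ord j) != (2%N, 2%N))
     cst (a i j) * vz ^+ i * vw ^+ j.

Definition Az (a : nat -> nat -> C) : {mpoly C[2]} :=
  cst (a 2%N 1%N) * vw ^+ 2 + 2%:R * cst (a 2%N 0%N) * vw + cst (a 3%N 0%N).

Definition Bw (a : nat -> nat -> C) : {mpoly C[2]} :=
  cst (a 1%N 2%N) * vz ^+ 2 + 2%:R * cst (a 0%N 2%N) * vz + cst (a 0%N 3%N).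

Definition proj_point (a : nat -> nat -> C) : Prop :=
  exists i j : nat, (i + j <= 3)%N /\ a i j != 0.

Definition Plucker (a : nat -> nat -> C) : Prop :=
  [/\ a 0%N 3%N * a 2%N 1%N - a 0%N 2%N * a 1%N 1%N + a 0%N 1%N * a 1%N 2%N = 0,
      a 0%N 3%N * a 2%N 0%N - a 0%N 2%N * a 1%N 0%N + a 0%N 0%N * a 1%N 2%N = 0,
      a 0%N 3%N * a 3%N 0%N - a 0%N 1%N * a 1%N 0%N + a 0%N 0%N * a 1%N 1%N = 0,
      a 0%N 2%N * a 3%N 0%N - a 0%N 1%N * a 2%N 0%N + a 0%N 0%N * a 2%N 1%N = 0 &
      a 1%N 2%N * a 3%N 0%N - a 1%N 1%N * a 2%N 0%N + a 1%N 0%N * a 2%N 1%N = 0].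

Definition SIC (a : nat -> nat -> C) : Prop :=
  let D := Dpol a in let A := Az a in let B := Bw a in
  [/\ 3%:R * A * D * pw (pw D) - 2%:R * A * B * pz D - 2%:R * A * (pw D) ^+ 2
        + D * pw D * pz (pz D) = 0,
      3%:R * B * D * pz (pz D) - 2%:R * A * B * pw D - 2%:R * B * (pz D) ^+ 2
        + D * pz D * pw (pw D) = 0 &
      2%:R * D ^+ 2 * pz (pz D) * pw (pw D) - B * D * pz D * pz (pz D)
        - A * D * pw D * pw (pw D) - A * B * pz D * pw D + A ^+ 2 * B ^+ 2 = 0].

End Defs.

(* Main.v *)
Require Import Defs.
From HB Require Import structures.
From mathcomp Require Import all_boot all_order all_algebra.
From mathcomp Require Import mpoly ring.
Set Implicit Arguments. Unset Strict Implicit.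
Import Order.TTheory GRing.Theory Num.Theory.
Local Open Scope ring_scope.

Lemma half0 (R : idomainType) (x : R) : (2%:R : R) != 0 -> 2%:R * x = 0 -> x = 0.
Proof. by move=> h /eqP; rewrite mulf_eq0 (negbTE h) => /eqP. Qed.

Lemma subr0E (R : zmodType) (x y : R) : x = y -> x - y = 0.
Proof. by move=> ->; rewrite subrr. Qed.

Lemma subr0I (R : zmodType) (x y : R) : x - y = 0 -> x = y.
Proof. by move/eqP; rewrite subr_eq0 => /eqP. Qed.

Lemma coreF (R : idomainType) (A B d dz dw dzz dww dzw dzzw dzww k : R) :
  2%:R * k - 3%:R = 0 -> (2%:R : R) != 0 ->
  A * B = dz * dw - d * dzw ->
  A * dww = dzz * dw - d * dzzw ->
  dzz * B = dz * dww - d * dzww ->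
  A * dzww = dzz * dzw - dz * dzzw ->
  B * dzzw = dww * dzw - dw * dzww ->
  (A = 0 -> dzz = 0 /\ dzzw = 0) ->
  (B = 0 -> dww = 0 /\ dzww = 0) ->
  2%:R * A * dw * dzw = 3%:R * d * dzz * dzw - 2%:R * d * dz * dzzw ->
  A * (2%:R * dzw ^+ 2 + 2%:R * dw * dzzw) = 3%:R * dz * dzz * dzw - 2%:R * dz ^+ 2 * dzzw + d * dzz * dzzw ->
  2%:R * B * dz * dzw = 3%:R * d * dww * dzw - 2%:R * d * dw * dzww ->
  B * (2%:R * dzw ^+ 2 + 2%:R * dz * dzww) = 3%:R * dw * dww * dzw - 2%:R * dw ^+ 2 * dzww + d * dww * dzww ->
  A * dw ^+ 2 = 2%:R * d * dw * dzz - k * d ^+ 2 * dzzw - dw * dz ^+ 2 + d * dz * dzw ->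
  B * dz ^+ 2 = 2%:R * d * dz * dww - k * d ^+ 2 * dzww - dz * dw ^+ 2 + d * dw * dzw ->
  dz ^+ 2 * dww + dw ^+ 2 * dzz + dz * dw * dzw
    = d * (2%:R * dzz * dww + dz * dzww + dw * dzzw + dzw ^+ 2).
Proof.
move=> Hk H2 /subr0E P0 /subr0E Pz0 /subr0E Pw0 /subr0E Pzz0 /subr0E Pww0 HA0 HB0
  /subr0E X1z /subr0E X1zz /subr0E X2w /subr0E X2ww /subr0E E1 /subr0E E2.
apply: subr0I.
have AF : A * (dz ^+ 2 * dww + dw ^+ 2 * dzz + dz * dw * dzw
    - d * (2%:R * dzz * dww + dz * dzww + dw * dzzw + dzw ^+ 2)) = 0.
  apply: half0 H2 _.
  have -> : 2%:R * (A * (dz ^+ 2 * dww + dw ^+ 2 * dzz + dz * dw * dzw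
    - d * (2%:R * dzz * dww + dz * dzww + dw * dzzw + dzw ^+ 2))) =
    (2%:R * (dz ^+ 2 - 2%:R * d * dzz)) * (A * dww - (dzz * dw - d * dzzw))
    + (2%:R * dzz) * (A * dw ^+ 2 - (2%:R * d * dw * dzz - k * d ^+ 2 * dzzw - dw * dz ^+ 2 + d * dz * dzw))
    + dz * (2%:R * A * dw * dzw - (3%:R * d * dzz * dzw - 2%:R * d * dz * dzzw))
    + (- (2%:R * d * dz)) * (A * dzww - (dzz * dzw - dz * dzzw))
    - d * (A * (2%:R * dzw ^+ 2 + 2%:R * dw * dzzw) - (3%:R * dz * dzz * dzw - 2%:R * dz ^+ 2 * dzzw + d * dzz * dzzw))
    - (d ^+ 2 * dzz * dzzw) * (2%:R * k - 3%:R) by ring.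
  by rewrite Pz0 E1 X1z Pzz0 X1zz Hk; ring.
have BF : B * (dz ^+ 2 * dww + dw ^+ 2 * dzz + dz * dw * dzw
    - d * (2%:R * dzz * dww + dz * dzww + dw * dzzw + dzw ^+ 2)) = 0.
  apply: half0 H2 _.
  have -> : 2%:R * (B * (dz ^+ 2 * dww + dw ^+ 2 * dzz + dz * dw * dzw
    - d * (2%:R * dzz * dww + dz * dzww + dw * dzzw + dzw ^+ 2))) =
    (2%:R * (dw ^+ 2 - 2%:R * d * dww)) * (dzz * B - (dz * dww - d * dzww))
    + (2%:R * dww) * (B * dz ^+ 2 - (2%:R * d * dz * dww - k * d ^+ 2 * dzww - dz * dw ^+ 2 + d * dw * dzw))
    + dw * (2%:R * B * dz * dzw - (3%:R * d * dww * dzw - 2%:R * d * dw * dzww))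
    + (- (2%:R * d * dw)) * (B * dzzw - (dww * dzw - dw * dzww))
    - d * (B * (2%:R * dzw ^+ 2 + 2%:R * dz * dzww) - (3%:R * dw * dww * dzw - 2%:R * dw ^+ 2 * dzww + d * dww * dzww))
    - (d ^+ 2 * dww * dzww) * (2%:R * k - 3%:R) by ring.
  by rewrite Pw0 E2 X2w Pww0 X2ww Hk; ring.
move/eqP: AF; rewrite mulf_eq0 => /orP [/eqP A0|/eqP //].
move/eqP: BF; rewrite mulf_eq0 => /orP [/eqP B0|/eqP //].
have [-> ->] := HA0 A0; have [-> ->] := HB0 B0.
have H0 : dz * dw - d * dzw = 0.
  by move: P0; rewrite A0 mul0r sub0r => /eqP; rewrite oppr_eq0 => /eqP.
transitivity (dzw * (dz * dw - d * dzw)); first ring.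
by rewrite H0 mulr0.
Qed.

Lemma coreS (R : idomainType) (A B d dz dw dzz dww dzw dzzw dzww k : R) :
  2%:R * k - 3%:R = 0 -> (2%:R : R) != 0 ->
  A * B = dz * dw - d * dzw ->
  A * dww = dzz * dw - d * dzzw ->
  dzz * B = dz * dww - d * dzww ->
  A * dzww = dzz * dzw - dz * dzzw ->
  B * dzzw = dww * dzw - dw * dzww ->
  (A = 0 -> dzz = 0 /\ dzzw = 0) ->
  (B = 0 -> dww = 0 /\ dzww = 0) ->
  (A * dw ^+ 2 = 2%:R * d * dw * dzz - k * d ^+ 2 * dzzw - dw * dz ^+ 2 + d * dz * dzw ->
   2%:R * A * dw * dzw = 3%:R * d * dzz * dzw - 2%:R * d * dz * dzzw /\
   A * (2%:R * dzw ^+ 2 + 2%:R * dw * dzzw) = 3%:R * dz * dzz * dzw - 2%:R * dz ^+ 2 * dzzw + d * dzz * dzzw) ->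
  (B * dz ^+ 2 = 2%:R * d * dz * dww - k * d ^+ 2 * dzww - dz * dw ^+ 2 + d * dw * dzw ->
   2%:R * B * dz * dzw = 3%:R * d * dww * dzw - 2%:R * d * dw * dzww /\
   B * (2%:R * dzw ^+ 2 + 2%:R * dz * dzww) = 3%:R * dw * dww * dzw - 2%:R * dw ^+ 2 * dzww + d * dww * dzww) ->
  ([/\ 3%:R * A * d * dww - 2%:R * A * B * dz - 2%:R * A * dw ^+ 2 + d * dw * dzz = 0,
      3%:R * B * d * dzz - 2%:R * A * B * dw - 2%:R * B * dz ^+ 2 + d * dz * dww = 0 &
      2%:R * d ^+ 2 * dzz * dww - B * d * dz * dzz - A * d * dw * dww - A * B * dz * dw
        + A ^+ 2 * B ^+ 2 = 0] <->
   (A * dw ^+ 2 = 2%:R * d * dw * dzz - k * d ^+ 2 * dzzw - dw * dz ^+ 2 + d * dz * dzw /\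
    B * dz ^+ 2 = 2%:R * d * dz * dww - k * d ^+ 2 * dzww - dz * dw ^+ 2 + d * dw * dzw)) /\
  ([/\ 3%:R * A * d * dww - 2%:R * A * B * dz - 2%:R * A * dw ^+ 2 + d * dw * dzz = 0,
      3%:R * B * d * dzz - 2%:R * A * B * dw - 2%:R * B * dz ^+ 2 + d * dz * dww = 0 &
      2%:R * d ^+ 2 * dzz * dww - B * d * dz * dzz - A * d * dw * dww - A * B * dz * dw
        + A ^+ 2 * B ^+ 2 = 0] ->
   dz ^+ 2 * dww + dw ^+ 2 * dzz + dz * dw * dzw
    = d * (2%:R * dzz * dww + dz * dzww + dw * dzzw + dzw ^+ 2)).
Proof.
move=> Hk H2 HP HPz HPw HPzz HPww HA0 HB0 HX1 HX2.
have P0 := subr0E HP; have Pz0 := subr0E HPz; have Pw0 := subr0E HPw.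
have I1 : 3%:R * A * d * dww - 2%:R * A * B * dz - 2%:R * A * dw ^+ 2 + d * dw * dzz
   = - (2%:R * (A * dw ^+ 2 - (2%:R * d * dw * dzz - k * d ^+ 2 * dzzw - dw * dz ^+ 2 + d * dz * dzw))).
  transitivity (- (2%:R * (A * dw ^+ 2 - (2%:R * d * dw * dzz - k * d ^+ 2 * dzzw - dw * dz ^+ 2 + d * dz * dzw)))
     + ((-(2%:R * dz)) * (A * B - (dz * dw - d * dzw)) + (3%:R * d) * (A * dww - (dzz * dw - d * dzzw))
        + (d ^+ 2 * dzzw) * (2%:R * k - 3%:R))); first ring.
  by rewrite P0 Pz0 Hk !mulr0 !addr0.
have I2 : 3%:R * B * d * dzz - 2%:R * A * B * dw - 2%:R * B * dz ^+ 2 + d * dz * dww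
   = - (2%:R * (B * dz ^+ 2 - (2%:R * d * dz * dww - k * d ^+ 2 * dzww - dz * dw ^+ 2 + d * dw * dzw))).
  transitivity (- (2%:R * (B * dz ^+ 2 - (2%:R * d * dz * dww - k * d ^+ 2 * dzww - dz * dw ^+ 2 + d * dw * dzw)))
     + ((-(2%:R * dw)) * (A * B - (dz * dw - d * dzw)) + (3%:R * d) * (dzz * B - (dz * dww - d * dzww))
        + (d ^+ 2 * dzww) * (2%:R * k - 3%:R))); first ring.
  by rewrite P0 Pw0 Hk !mulr0 !addr0.
have I3 : 2%:R * d ^+ 2 * dzz * dww - B * d * dz * dzz - A * d * dw * dww - A * B * dz * dw
        + A ^+ 2 * B ^+ 2 = - (d * (dz ^+ 2 * dww + dw ^+ 2 * dzz + dz * dw * dzw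
    - d * (2%:R * dzz * dww + dz * dzww + dw * dzzw + dzw ^+ 2))).
  transitivity (- (d * (dz ^+ 2 * dww + dw ^+ 2 * dzz + dz * dw * dzw
    - d * (2%:R * dzz * dww + dz * dzww + dw * dzzw + dzw ^+ 2)))
    + ((A * B - (dz * dw - d * dzw)) * (A * B - d * dzw)
       - (d * dw) * (A * dww - (dzz * dw - d * dzzw))
       - (d * dz) * (dzz * B - (dz * dww - d * dzww)))); first ring.
  by rewrite P0 Pz0 Pw0 !mulr0 mul0r !subr0 addr0.
have EF : A * dw ^+ 2 = 2%:R * d * dw * dzz - k * d ^+ 2 * dzzw - dw * dz ^+ 2 + d * dz * dzw ->
    B * dz ^+ 2 = 2%:R * d * dz * dww - k * d ^+ 2 * dzww - dz * dw ^+ 2 + d * dw * dzw ->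
    dz ^+ 2 * dww + dw ^+ 2 * dzz + dz * dw * dzw
    = d * (2%:R * dzz * dww + dz * dzww + dw * dzzw + dzw ^+ 2).
  move=> E1 E2; have [X1 X1'] := HX1 E1; have [X2 X2'] := HX2 E2.
  exact: (coreF Hk H2 HP HPz HPw HPzz HPww HA0 HB0 X1 X1' X2 X2' E1 E2).
have SE : [/\ 3%:R * A * d * dww - 2%:R * A * B * dz - 2%:R * A * dw ^+ 2 + d * dw * dzz = 0,
      3%:R * B * d * dzz - 2%:R * A * B * dw - 2%:R * B * dz ^+ 2 + d * dz * dww = 0 &
      2%:R * d ^+ 2 * dzz * dww - B * d * dz * dzz - A * d * dw * dww - A * B * dz * dw
        + A ^+ 2 * B ^+ 2 = 0] ->
   (A * dw ^+ 2 = 2%:R * d * dw * dzz - k * d ^+ 2 * dzzw - dw * dz ^+ 2 + d * dz * dzw /\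
    B * dz ^+ 2 = 2%:R * d * dz * dww - k * d ^+ 2 * dzww - dz * dw ^+ 2 + d * dw * dzw).
  case; rewrite I1 I2 => /eqP; rewrite oppr_eq0 => /eqP /(half0 H2) /subr0I E1.
  by move=> /eqP; rewrite oppr_eq0 => /eqP /(half0 H2) /subr0I E2 _.
split; last by move=> /SE [E1 E2]; exact: EF.
split=> // -[E1 E2]; split.
- by rewrite I1 (subr0E E1) mulr0 oppr0.
- by rewrite I2 (subr0E E2) mulr0 oppr0.
- by rewrite I3 (subr0E (EF E1 E2)) mulr0 oppr0.
Qed.

Lemma quad (C : numClosedFieldType) (c0 c1 c2 c4 c5 : C) :
  (forall x y : C, c0 + 2%:R * c2 * y + c1 * y ^+ 2 + 2%:R * c4 * x + c5 * x ^+ 2 = 0) ->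
  [/\ c1 = 0, c2 = 0, c0 = 0, c4 = 0 & c5 = 0].
Proof.
set f := fun x y : C => c0 + 2%:R * c2 * y + c1 * y ^+ 2 + 2%:R * c4 * x + c5 * x ^+ 2.
move=> h; have {}h : forall x y, f x y = 0 by [].
have h2 : (2%:R : C) != 0 by rewrite pnatr_eq0.
have h4 : (2%:R * 2%:R : C) != 0 by rewrite mulf_neq0.
have E0 : c0 = f 0 0 by rewrite /f; ring.
have E1 : 2%:R * c1 = f 0 1 + f 0 (-1) - 2%:R * f 0 0 by rewrite /f; ring.
have E2 : 2%:R * (2%:R * c2) = f 0 1 - f 0 (-1) by rewrite /f; ring.
have E5 : 2%:R * c5 = f 1 0 + f (-1) 0 - 2%:R * f 0 0 by rewrite /f; ring.
have E4 : 2%:R * (2%:R * c4) = f 1 0 - f (-1) 0 by rewrite /f; ring.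
rewrite !h ?subrr ?mulr0 ?subr0 ?addr0 in E0 E1 E2 E4 E5.
split=> //; do ?[exact: (half0 h2)]; apply: (half0 h2); exact: (half0 h2).
Qed.

Lemma lin1 (R : comRingType) (x y e : R) : e = 0 -> x - y = e -> x = y.
Proof. by move=> -> /eqP; rewrite subr_eq0 => /eqP. Qed.
Lemma lin2 (R : comRingType) (x y e f c : R) : e = 0 -> f = 0 -> x - y = e - c * f -> x = y.
Proof. by move=> -> -> /eqP; rewrite mulr0 subr0 subr_eq0 => /eqP. Qed.

Lemma UU (i : 'I_2) : (U_(i) - U_(i) = 0 :> 'X_{1..2})%MM.
Proof. by apply/mnmP=> j; rewrite mnmBE subnn mnm0E. Qed.
Lemma pz_vz (C : numClosedFieldType) : pz (vz C) = 1.
Proof. by rewrite /pz /vz mderivX mnm1E eqxx UU mpolyX0 scale1r. Qed.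
Lemma pw_vw (C : numClosedFieldType) : pw (vw C) = 1.
Proof. by rewrite /pw /vw mderivX mnm1E eqxx UU mpolyX0 scale1r. Qed.
Lemma pz_vw (C : numClosedFieldType) : pz (vw C) = 0.
Proof. by rewrite /pz /vw mderivX mnm1E /= scale0r. Qed.
Lemma pw_vz (C : numClosedFieldType) : pw (vz C) = 0.
Proof. by rewrite /pw /vz mderivX mnm1E /= scale0r. Qed.
Lemma pzD (C : numClosedFieldType) (p q : {mpoly C[2]}) : pz (p + q) = pz p + pz q.
Proof. exact: mderivD. Qed.
Lemma pwD (C : numClosedFieldType) (p q : {mpoly C[2]}) : pw (p + q) = pw p + pw q.
Proof. exact: mderivD. Qed.
Lemma pzB (C : numClosedFieldType) (p q : {mpoly C[2]}) : pz (p - q) = pz p - pz q.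
Proof. exact: mderivB. Qed.
Lemma pwB (C : numClosedFieldType) (p q : {mpoly C[2]}) : pw (p - q) = pw p - pw q.
Proof. exact: mderivB. Qed.
Lemma pzM (C : numClosedFieldType) (p q : {mpoly C[2]}) : pz (p * q) = pz p * q + p * pz q.
Proof. exact: mderivM. Qed.
Lemma pwM (C : numClosedFieldType) (p q : {mpoly C[2]}) : pw (p * q) = pw p * q + p * pw q.
Proof. exact: mderivM. Qed.
Lemma pzX2 (C : numClosedFieldType) (p : {mpoly C[2]}) : pz (p ^+ 2) = pz p * p + p * pz p.
Proof. by rewrite expr2 pzM. Qed.
Lemma pwX2 (C : numClosedFieldType) (p : {mpoly C[2]}) : pw (p ^+ 2) = pw p * p + p * pw p.
Proof. by rewrite expr2 pwM. Qed.
Lemma pz_cst (C : numClosedFieldType) (c : C) : pz (cst c) = 0.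
Proof. exact: mderivC. Qed.
Lemma pw_cst (C : numClosedFieldType) (c : C) : pw (cst c) = 0.
Proof. exact: mderivC. Qed.
Lemma pz_nat (C : numClosedFieldType) n : pz (n%:R : {mpoly C[2]}) = 0.
Proof. by rewrite -mpolyC_nat; exact: mderivC. Qed.
Lemma pw_nat (C : numClosedFieldType) n : pw (n%:R : {mpoly C[2]}) = 0.
Proof. by rewrite -mpolyC_nat; exact: mderivC. Qed.
Lemma pz0 (C : numClosedFieldType) : pz (0 : {mpoly C[2]}) = 0.
Proof. exact: mderiv0. Qed.
Lemma pw0 (C : numClosedFieldType) : pw (0 : {mpoly C[2]}) = 0.
Proof. exact: mderiv0. Qed.
Lemma pwz (C : numClosedFieldType) (p : {mpoly C[2]}) : pw (pz p) = pz (pw p).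
Proof. exact: mderiv_comm. Qed.

Lemma DpolE (C : numClosedFieldType) (a : nat -> nat -> C) : Dpol a =
  cst (a 0%N 0%N) + cst (a 0%N 1%N) * vw C + cst (a 0%N 2%N) * vw C ^+ 2
  + cst (a 1%N 0%N) * vz C + cst (a 1%N 1%N) * vz C * vw C + cst (a 1%N 2%N) * vz C * vw C ^+ 2
  + cst (a 2%N 0%N) * vz C ^+ 2 + cst (a 2%N 1%N) * vz C ^+ 2 * vw C.
Proof.
rewrite /Dpol !big_ord_recr big_ord0 /=.
by rewrite !big_ord0 big_mkcond !big_ord_recr !big_ord0 /=; ring.
Qed.

Lemma pz1 (C : numClosedFieldType) : pz (1 : {mpoly C[2]}) = 0.
Proof. by rewrite -mpolyC1; exact: mderivC. Qed.
Lemma pw1 (C : numClosedFieldType) : pw (1 : {mpoly C[2]}) = 0.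
Proof. by rewrite -mpolyC1; exact: mderivC. Qed.



Lemma absAll (C : numClosedFieldType) (R : idomainType) (g : {rmorphism C -> R})
  (pz pw : R -> R) (z w D A B : R) (a : nat -> nat -> C) :
  (forall p q, pz (p + q) = pz p + pz q) -> (forall p q, pw (p + q) = pw p + pw q) ->
  (forall p q, pz (p - q) = pz p - pz q) -> (forall p q, pw (p - q) = pw p - pw q) ->
  (forall p q, pz (p * q) = pz p * q + p * pz q) -> (forall p q, pw (p * q) = pw p * q + p * pw q) ->
  (forall p, pz (- p) = - pz p) -> (forall p, pw (- p) = - pw p) ->
  (forall c, pz (g c) = 0) -> (forall c, pw (g c) = 0) ->
  (forall n, pz n%:R = 0) -> (forall n, pw n%:R = 0) ->
  pz 0 = 0 -> pw 0 = 0 -> pz 1 = 0 -> pw 1 = 0 ->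
  pz z = 1 -> pw z = 0 -> pz w = 0 -> pw w = 1 ->
  (forall p, pw (pz p) = pz (pw p)) ->
  (2%:R : R) != 0 ->
  (forall x y : C, exists f : {rmorphism R -> C}, [/\ f z = x, f w = y & forall c, f (g c) = c]) ->
  D = g (a 0%N 0%N) + g (a 0%N 1%N) * w + g (a 0%N 2%N) * w ^+ 2
  + g (a 1%N 0%N) * z + g (a 1%N 1%N) * z * w + g (a 1%N 2%N) * z * w ^+ 2
  + g (a 2%N 0%N) * z ^+ 2 + g (a 2%N 1%N) * z ^+ 2 * w ->
  A = g (a 2%N 1%N) * w ^+ 2 + 2%:R * g (a 2%N 0%N) * w + g (a 3%N 0%N) ->
  B = g (a 1%N 2%N) * z ^+ 2 + 2%:R * g (a 0%N 2%N) * z + g (a 0%N 3%N) ->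
  (Plucker a <-> A * B = pz D * pw D - D * pz (pw D)) /\
  (Plucker a ->
     ([/\ 3%:R * A * D * pw (pw D) - 2%:R * A * B * pz D - 2%:R * A * (pw D) ^+ 2
        + D * pw D * pz (pz D) = 0,
      3%:R * B * D * pz (pz D) - 2%:R * A * B * pw D - 2%:R * B * (pz D) ^+ 2
        + D * pz D * pw (pw D) = 0 &
      2%:R * D ^+ 2 * pz (pz D) * pw (pw D) - B * D * pz D * pz (pz D)
        - A * D * pw D * pw (pw D) - A * B * pz D * pw D + A ^+ 2 * B ^+ 2 = 0] <->
        (A * (pw D) ^+ 2 = 2%:R * D * pw D * pz (pz D)
            - g (3%:R / 2%:R) * D ^+ 2 * pw (pz (pz D))
            - pw D * (pz D) ^+ 2 + D * pz D * pz (pw D) /\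
         B * (pz D) ^+ 2 = 2%:R * D * pz D * pw (pw D)
            - g (3%:R / 2%:R) * D ^+ 2 * pz (pw (pw D))
            - pz D * (pw D) ^+ 2 + D * pw D * pz (pw D))) /\
     ([/\ 3%:R * A * D * pw (pw D) - 2%:R * A * B * pz D - 2%:R * A * (pw D) ^+ 2
        + D * pw D * pz (pz D) = 0,
      3%:R * B * D * pz (pz D) - 2%:R * A * B * pw D - 2%:R * B * (pz D) ^+ 2
        + D * pz D * pw (pw D) = 0 &
      2%:R * D ^+ 2 * pz (pz D) * pw (pw D) - B * D * pz D * pz (pz D)
        - A * D * pw D * pw (pw D) - A * B * pz D * pw D + A ^+ 2 * B ^+ 2 = 0] ->
        (pz D) ^+ 2 * pw (pw D) + (pw D) ^+ 2 * pz (pz D) + pz D * pw D * pz (pw D)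
        = D * (2%:R * pz (pz D) * pw (pw D) + pz D * pz (pw (pw D))
               + pw D * pw (pz (pz D)) + (pz (pw D)) ^+ 2))).
Proof.
move=> pzD pwD pzB pwB pzM pwM pzN pwN pzg pwg pznat pwnat pz0 pw0 pz1 pw1 pzz pwz' pzw pww pwz H2 Hev HD HA HB.
have eDz : pz D = g (a 1%N 0%N) + g (a 1%N 1%N) * w + g (a 1%N 2%N) * w ^+ 2 + 2%:R * g (a 2%N 0%N) * z + 2%:R * g (a 2%N 1%N) * z * w by rewrite HD; rewrite ?(pzD, pwD, pzB, pwB, pzM, pwM, pzN, pwN, pzg, pwg, pznat, pwnat, pz0, pw0, pz1, pw1, pzz, pzw, pwz', pww); ring.
have eDw : pw D = g (a 0%N 1%N) + 2%:R * g (a 0%N 2%N) * w + g (a 1%N 1%N) * z + 2%:R * g (a 1%N 2%N) * z * w + g (a 2%N 1%N) * z ^+ 2 by rewrite HD; rewrite ?(pzD, pwD, pzB, pwB, pzM, pwM, pzN, pwN, pzg, pwg, pznat, pwnat, pz0, pw0, pz1, pw1, pzz, pzw, pwz', pww); ring.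
have eDzz : pz (pz D) = 2%:R * g (a 2%N 0%N) + 2%:R * g (a 2%N 1%N) * w by rewrite eDz; rewrite ?(pzD, pwD, pzB, pwB, pzM, pwM, pzN, pwN, pzg, pwg, pznat, pwnat, pz0, pw0, pz1, pw1, pzz, pzw, pwz', pww); ring.
have eDzw : pz (pw D) = g (a 1%N 1%N) + 2%:R * g (a 1%N 2%N) * w + 2%:R * g (a 2%N 1%N) * z by rewrite eDw; rewrite ?(pzD, pwD, pzB, pwB, pzM, pwM, pzN, pwN, pzg, pwg, pznat, pwnat, pz0, pw0, pz1, pw1, pzz, pzw, pwz', pww); ring.
have eDww : pw (pw D) = 2%:R * g (a 0%N 2%N) + 2%:R * g (a 1%N 2%N) * z by rewrite eDw; rewrite ?(pzD, pwD, pzB, pwB, pzM, pwM, pzN, pwN, pzg, pwg, pznat, pwnat, pz0, pw0, pz1, pw1, pzz, pzw, pwz', pww); ring.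
have eDzzw : pz (pz (pw D)) = 2%:R * g (a 2%N 1%N) by rewrite eDzw; rewrite ?(pzD, pwD, pzB, pwB, pzM, pwM, pzN, pwN, pzg, pwg, pznat, pwnat, pz0, pw0, pz1, pw1, pzz, pzw, pwz', pww); ring.
have eDzww : pz (pw (pw D)) = 2%:R * g (a 1%N 2%N) by rewrite eDww; rewrite ?(pzD, pwD, pzB, pwB, pzM, pwM, pzN, pwN, pzg, pwg, pznat, pwnat, pz0, pw0, pz1, pw1, pzz, pzw, pwz', pww); ring.
have z3 : pz (pz (pz D)) = 0 by rewrite eDzz; rewrite ?(pzD, pwD, pzB, pwB, pzM, pwM, pzN, pwN, pzg, pwg, pznat, pwnat, pz0, pw0, pz1, pw1, pzz, pzw, pwz', pww); ring.
have w3 : pw (pw (pw D)) = 0 by rewrite eDww; rewrite ?(pzD, pwD, pzB, pwB, pzM, pwM, pzN, pwN, pzg, pwg, pznat, pwnat, pz0, pw0, pz1, pw1, pzz, pzw, pwz', pww); ring.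
have z3w : pz (pz (pz (pw D))) = 0 by rewrite eDzzw; rewrite ?(pzD, pwD, pzB, pwB, pzM, pwM, pzN, pwN, pzg, pwg, pznat, pwnat, pz0, pw0, pz1, pw1, pzz, pzw, pwz', pww); ring.
have zw3 : pz (pw (pw (pw D))) = 0 by rewrite eDww; rewrite ?(pzD, pwD, pzB, pwB, pzM, pwM, pzN, pwN, pzg, pwg, pznat, pwnat, pz0, pw0, pz1, pw1, pzz, pzw, pwz', pww); ring.
have z2w2 : pz (pz (pw (pw D))) = 0 by rewrite eDww; rewrite ?(pzD, pwD, pzB, pwB, pzM, pwM, pzN, pwN, pzg, pwg, pznat, pwnat, pz0, pw0, pz1, pw1, pzz, pzw, pwz', pww); ring.
have Az0 : pz A = 0 by rewrite HA; rewrite ?(pzD, pwD, pzB, pwB, pzM, pwM, pzN, pwN, pzg, pwg, pznat, pwnat, pz0, pw0, pz1, pw1, pzz, pzw, pwz', pww); ring.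
have Aw : pw A = pz (pz D) by rewrite HA eDzz; rewrite ?(pzD, pwD, pzB, pwB, pzM, pwM, pzN, pwN, pzg, pwg, pznat, pwnat, pz0, pw0, pz1, pw1, pzz, pzw, pwz', pww); ring.
have Bw0 : pw B = 0 by rewrite HB; rewrite ?(pzD, pwD, pzB, pwB, pzM, pwM, pzN, pwN, pzg, pwg, pznat, pwnat, pz0, pw0, pz1, pw1, pzz, pzw, pwz', pww); ring.
have Bz : pz B = pw (pw D) by rewrite HB eDww; rewrite ?(pzD, pwD, pzB, pwB, pzM, pwM, pzN, pwN, pzg, pwg, pznat, pwnat, pz0, pw0, pz1, pw1, pzz, pzw, pwz', pww); ring.
have Pexp : A * B - (pz D * pw D - D * pz (pw D)) =
  g (a 0%N 3%N * a 3%N 0%N - a 0%N 1%N * a 1%N 0%N + a 0%N 0%N * a 1%N 1%N)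
  + 2%:R * g (a 0%N 3%N * a 2%N 0%N - a 0%N 2%N * a 1%N 0%N + a 0%N 0%N * a 1%N 2%N) * w
  + g (a 0%N 3%N * a 2%N 1%N - a 0%N 2%N * a 1%N 1%N + a 0%N 1%N * a 1%N 2%N) * w ^+ 2
  + 2%:R * g (a 0%N 2%N * a 3%N 0%N - a 0%N 1%N * a 2%N 0%N + a 0%N 0%N * a 2%N 1%N) * z
  + g (a 1%N 2%N * a 3%N 0%N - a 1%N 1%N * a 2%N 0%N + a 1%N 0%N * a 2%N 1%N) * z ^+ 2.
  rewrite eDzw eDz eDw HA HB HD.
  rewrite !(rmorphD, rmorphB, rmorphM).
  ring.
have PE : Plucker a <-> A * B = pz D * pw D - D * pz (pw D).
  split.
  - case=> h1 h2 h3 h4 h5; apply: (lin1 (e := 0)) => //.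
    by rewrite Pexp h1 h2 h3 h4 h5 rmorph0; ring.
  - move=> h; move: Pexp; rewrite h subrr => /esym H0.
    rewrite /Plucker; apply: quad => x y.
    have [f [fz fw fg]] := Hev x y.
    have := congr1 f H0.
    by rewrite !(rmorph0, rmorphD, rmorphM, rmorph_nat, rmorphXn, fz, fw, fg) => <-.
split; first exact: PE.
move=> /PE HP.
rewrite !pwz.
have Hk : 2%:R * g (3%:R / 2%:R) - 3%:R = 0 :> R.
  have e : 2%:R * (3%:R / 2%:R) - 3%:R = 0 :> C.
    by rewrite mulrC divfK ?subrr // pnatr_eq0.
  by move: (congr1 g e); rewrite rmorph0 rmorphB rmorphM !rmorph_nat.

have HPz : A * pw (pw D) = pz (pz D) * pw D - D * pz (pz (pw D)).
  have := congr1 pz HP; rewrite ?(pzD, pwD, pzB, pwB, pzM, pwM, pzN, pwN, pzg, pwg, pznat, pwnat, pz0, pw0, pz1, pw1, pzz, pzw, pwz', pww); rewrite ?pwz ?Az0 ?Bz ?z3 ?w3 ?z3w ?zw3 ?z2w2 ?pz0 ?pw0 => h.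
  by apply: (lin1 (subr0E h)); ring.
have HPw : pz (pz D) * B = pz D * pw (pw D) - D * pz (pw (pw D)).
  have := congr1 pw HP; rewrite ?(pzD, pwD, pzB, pwB, pzM, pwM, pzN, pwN, pzg, pwg, pznat, pwnat, pz0, pw0, pz1, pw1, pzz, pzw, pwz', pww); rewrite ?pwz ?Aw ?Bw0 ?z3 ?w3 ?z3w ?zw3 ?z2w2 ?pz0 ?pw0 => h.
  by apply: (lin1 (subr0E h)); ring.
have HPzz : A * pz (pw (pw D)) = pz (pz D) * pz (pw D) - pz D * pz (pz (pw D)).
  have := congr1 pz HPz; rewrite ?(pzD, pwD, pzB, pwB, pzM, pwM, pzN, pwN, pzg, pwg, pznat, pwnat, pz0, pw0, pz1, pw1, pzz, pzw, pwz', pww); rewrite ?pwz ?Az0 ?Bz ?z3 ?w3 ?z3w ?zw3 ?z2w2 ?pz0 ?pw0 => h.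
  by apply: (lin1 (subr0E h)); ring.
have HPww : B * pz (pz (pw D)) = pw (pw D) * pz (pw D) - pw D * pz (pw (pw D)).
  have := congr1 pw HPw; rewrite ?(pzD, pwD, pzB, pwB, pzM, pwM, pzN, pwN, pzg, pwg, pznat, pwnat, pz0, pw0, pz1, pw1, pzz, pzw, pwz', pww); rewrite ?pwz ?Aw ?Bw0 ?z3 ?w3 ?z3w ?zw3 ?z2w2 ?pz0 ?pw0 => h.
  by apply: (lin1 (subr0E h)); ring.
apply: (coreS Hk H2 HP HPz HPw HPzz HPww).
- move=> A0; split; first by rewrite -Aw A0 pw0.
  by rewrite -!pwz -Aw A0 !pw0.
- move=> B0; split; first by rewrite -Bz B0 pz0.
  by rewrite -Bz B0 !pz0.
- move=> E1.
  have X1 : 2%:R * A * pw D * pz (pw D) = 3%:R * D * pz (pz D) * pz (pw D) - 2%:R * D * pz D * pz (pz (pw D)).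
    have := congr1 pz E1; rewrite ?(pzD, pwD, pzB, pwB, pzM, pwM, pzN, pwN, pzg, pwg, pznat, pwnat, pz0, pw0, pz1, pw1, pzz, pzw, pwz', pww); rewrite ?pwz ?Az0 ?Bz ?z3 ?w3 ?z3w ?zw3 ?z2w2 ?pz0 ?pw0 => h.
    by apply: (lin2 (subr0E h) Hk (c := D * pz D * pz (pz (pw D)))); ring.
  split=> //.
  have := congr1 pz X1; rewrite ?(pzD, pwD, pzB, pwB, pzM, pwM, pzN, pwN, pzg, pwg, pznat, pwnat, pz0, pw0, pz1, pw1, pzz, pzw, pwz', pww); rewrite ?pwz ?Az0 ?Bz ?z3 ?w3 ?z3w ?zw3 ?z2w2 ?pz0 ?pw0 => h.
  by apply: (lin1 (subr0E h)); ring.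
- move=> E2.
  have X2 : 2%:R * B * pz D * pz (pw D) = 3%:R * D * pw (pw D) * pz (pw D) - 2%:R * D * pw D * pz (pw (pw D)).
    have := congr1 pw E2; rewrite ?(pzD, pwD, pzB, pwB, pzM, pwM, pzN, pwN, pzg, pwg, pznat, pwnat, pz0, pw0, pz1, pw1, pzz, pzw, pwz', pww); rewrite ?pwz ?Aw ?Bw0 ?z3 ?w3 ?z3w ?zw3 ?z2w2 ?pz0 ?pw0 => h.
    by apply: (lin2 (subr0E h) Hk (c := D * pw D * pz (pw (pw D)))); ring.
  split=> //.
  have := congr1 pw X2; rewrite ?(pzD, pwD, pzB, pwB, pzM, pwM, pzN, pwN, pzg, pwg, pznat, pwnat, pz0, pw0, pz1, pw1, pzz, pzw, pwz', pww); rewrite ?pwz ?Aw ?Bw0 ?z3 ?w3 ?z3w ?zw3 ?z2w2 ?pz0 ?pw0 => h.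
  by apply: (lin1 (subr0E h)); ring.
Qed.

Unset Implicit Arguments.

Theorem lemma3p7 (C : numClosedFieldType) (a : nat -> nat -> C) :
  proj_point a ->
  let D := Dpol a in let A := Az a in let B := Bw a in
  (Plucker a <-> A * B = pz D * pw D - D * pz (pw D)) /\
  (Plucker a ->
     (SIC a <->
        (A * (pw D) ^+ 2 = 2%:R * D * pw D * pz (pz D)
            - cst (3%:R / 2%:R) * D ^+ 2 * pw (pz (pz D))
            - pw D * (pz D) ^+ 2 + D * pz D * pz (pw D) /\
         B * (pz D) ^+ 2 = 2%:R * D * pz D * pw (pw D)
            - cst (3%:R / 2%:R) * D ^+ 2 * pz (pw (pw D))
            - pz D * (pw D) ^+ 2 + D * pw D * pz (pw D))) /\
     (SIC a ->
        (pz D) ^+ 2 * pw (pw D) + (pw D) ^+ 2 * pz (pz D) + pz D * pw D * pz (pw D)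
        = D * (2%:R * pz (pz D) * pw (pw D) + pz D * pz (pw (pw D))
               + pw D * pw (pz (pz D)) + (pz (pw D)) ^+ 2))).
Proof.
move=> _; rewrite /SIC; cbv zeta.
pose g : {rmorphism C -> {mpoly C[2]}} := GRing.RMorphism.clone _ _ (@mpolyC 2 C) _.
have Hev : forall x y : C, exists f : {rmorphism {mpoly C[2]} -> C},
    [/\ f (vz C) = x, f (vw C) = y & forall c, f (g c) = c].
  move=> x y.
  pose v := fun i : 'I_2 => if val i == 0%N then x else y.
  exists (GRing.RMorphism.clone _ _ (meval v) _).
  by split; rewrite /= ?/vz ?/vw ?mevalXU // => c; rewrite mevalC.
have H2 : (2%:R : {mpoly C[2]}) != 0 by rewrite -mpolyC_nat mpolyC_eq0 pnatr_eq0.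
have HH := (@absAll C _ g (@pz C) (@pw C) (vz C) (vw C) (Dpol a) (Az a) (Bw a) a
  (@pzD C) (@pwD C) (@pzB C) (@pwB C) (@pzM C) (@pwM C)
  (fun p => mderivN _ p) (fun p => mderivN _ p)
  (fun c => mderivC _ c) (fun c => mderivC _ c) (@pz_nat C) (@pw_nat C)
  (@pz0 C) (@pw0 C) (@pz1 C) (@pw1 C) (@pz_vz C) (@pw_vz C) (@pz_vw C) (@pw_vw C)
  (@pwz C) H2 Hev (DpolE a) erefl erefl).
exact HH.
Qed.
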